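(* For every alphabet size $\sigma \geq 2$ and every Parikh vector $P \in \mathbb{N}^{\sigma}$, and for every vertex $w$ of the configuration graph $G(P)$, there exists a Hamiltonian path in $G(P)$ starting at $w$.
   Context: Alphabet $\Sigma = [\sigma]$. For $P \in \mathbb{N}^\sigma$, $n := \sum_a P[a]$ and $\Sigma^{*|_P}$ is the set of words of length $n$ over $\Sigma$ in which each symbol $a$ occurs exactly $P[a]$ times. For a word $w$ and $i\neq j$ with $w[i]\neq w[j]$, the 2-swap $w\circ(i,j)$ exchanges the symbols at positions $i$ and $j$. The configuration graph $G(P)$ has vertex set $\Sigma^{*|_P}$ and an edge $\{w,u\}$ whenever $u = w\circ(i,j)$ for some 2-swap. A Hamiltonian path starting at $w$ is a path beginning at $w$ that visits every vertex exactly once. *)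

(* Defs.v *)
From mathcomp Require Import all_boot.
Set Implicit Arguments. Unset Strict Implicit. Unset Printing Implicit Defensive.

(* Alphabet Sigma = [sigma] is modelled by 'I_sigma; words are seq 'I_sigma.
   A Parikh vector P in N^sigma is a function 'I_sigma -> nat. *)

Definition has_parikh (sigma : nat) (P : 'I_sigma -> nat) (w : seq 'I_sigma) : bool :=
  [forall a : 'I_sigma, count_mem a w == P a].

Definition swap2 (sigma : nat) (w : seq 'I_sigma) (i j : nat) : seq 'I_sigma :=
  [seq (if kc.1 == i then nth kc.2 w j
        else if kc.1 == j then nth kc.2 w i
        else kc.2) | kc <- zip (iota 0 (size w)) w].
  (* the defaults kc.2 are irrelevant since i, j < size w below *)

Definition swap_adj (sigma : nat) (w u : seq 'I_sigma) : Prop :=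
  exists i j : nat, [/\ i < size w, j < size w, i != j,
    onth w i != onth w j & u = swap2 w i j].

Fixpoint adj_path (sigma : nat) (x : seq 'I_sigma) (p : seq (seq 'I_sigma)) : Prop :=
  match p with
  | [::] => True
  | y :: p' => swap_adj x y /\ adj_path y p'
  end.

Definition hamiltonian_path_from (sigma : nat) (P : 'I_sigma -> nat)
    (w : seq 'I_sigma) (p : seq (seq 'I_sigma)) : Prop :=
  [/\ uniq (w :: p),
      all (has_parikh P) (w :: p),
      (forall u, has_parikh P u -> u \in w :: p)
    & adj_path w p].

(* Main.v *)
Require Import Defs.
From mathcomp Require Import all_boot.
Set Implicit Arguments. Unset Strict Implicit. Unset Printing Implicit Defensive.

Lemma size_swap2 sigma (w : seq 'I_sigma) i j : size (swap2 w i j) = size w.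
Proof. by rewrite /swap2 size_map size_zip size_iota minnn. Qed.

Lemma nth_swap2 sigma (w : seq 'I_sigma) i j k x0 :
  i < size w -> j < size w -> k < size w ->
  nth x0 (swap2 w i j) k =
  if k == i then nth x0 w j else if k == j then nth x0 w i else nth x0 w k.
Proof.
move=> Hi Hj Hk.
rewrite /swap2 (nth_map (0, x0)) ?size_zip ?size_iota ?minnn //.
rewrite nth_zip ?size_iota // /= nth_iota // add0n.
by rewrite (set_nth_default x0 (nth x0 w k) Hj) (set_nth_default x0 (nth x0 w k) Hi).
Qed.

Lemma swap_adj_cons sigma (c : 'I_sigma) u v :
  swap_adj u v -> swap_adj (c :: u) (c :: v).
Proof.
move=> [i [j [Hi Hj Hij Hne ->]]].
exists i.+1, j.+1; split; rewrite /= ?ltnS ?eqSS //.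
apply: (@eq_from_nth _ c); first by rewrite size_swap2 /= size_swap2.
move=> k; rewrite -[size (c :: _)]/((size (swap2 u i j)).+1) size_swap2 => Hk.
rewrite nth_swap2 //; case: k Hk => [|k] Hk //=.
by rewrite nth_swap2.
Qed.

Lemma swap_adj_cross sigma (a b : 'I_sigma) z1 z2 :
  a != b -> swap_adj (a :: z1 ++ b :: z2) (b :: z1 ++ a :: z2).
Proof.
move=> Hab.
have Hs : size (a :: z1 ++ b :: z2) = (size z1 + size z2).+2.
  by rewrite /= size_cat /= addnS.
exists 0, (size z1).+1; split.
- by [].
- by rewrite Hs ltnS ltnS leq_addr.
- by [].
- by rewrite /= onth_cat ltnn subnn /=; apply: contra Hab => /eqP [->].
apply: (@eq_from_nth _ a); first by rewrite size_swap2 Hs /= size_cat /= addnS.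
move=> k; rewrite -[size (b :: _)]/((size (z1 ++ a :: z2)).+1) size_cat /= addnS => Hk.
rewrite nth_swap2 ?Hs //; last by rewrite ltnS ltnS leq_addr.
case: k Hk => [|k] Hk /=; first by rewrite nth_cat ltnn subnn.
rewrite eqSS !nth_cat.
case: (ltngtP k (size z1)) => H //=.
- have -> : k - size z1 = (k - size z1).-1.+1 by rewrite prednK // subn_gt0.
  by [].
- by rewrite H subnn.
Qed.

Lemma parikh_cons sigma (P : 'I_sigma -> nat) a u :
  has_parikh P (a :: u) -> 0 < P a /\ has_parikh (fun x => P x - (x == a)) u.
Proof.
move/forallP => H; split.
  by move: (H a) => /eqP <-; rewrite /= eqxx.
apply/forallP => x; move: (H x) => /eqP <- /=; rewrite [a == x]eq_sym.
by case: (x == a); rewrite /= ?add1n ?subSS ?subn0 ?add0n ?eqxx.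
Qed.

Lemma parikh_cons2 sigma (P : 'I_sigma -> nat) a u :
  0 < P a -> has_parikh (fun x => P x - (x == a)) u -> has_parikh P (a :: u).
Proof.
move=> HP /forallP H; apply/forallP => x; move: (H x) => /eqP /= E.
rewrite [a == x]eq_sym; case: eqP E => [->|_] E; last by rewrite add0n E subn0.
by rewrite add1n E subn1 prednK.
Qed.

Lemma parikh_perm sigma (P : 'I_sigma -> nat) u v :
  has_parikh P u -> has_parikh P v -> perm_eq u v.
Proof.
move=> /forallP hu /forallP hv; rewrite /perm_eq; apply/allP => x _ /=.
by move: (hu x) (hv x) => /eqP -> /eqP ->.
Qed.

Definition hd_in sigma (S : seq 'I_sigma) (u : seq 'I_sigma) : bool :=
  if u is c :: _ then c \in S else false.

Lemma hd_in_sub sigma (S S' : seq 'I_sigma) u :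
  {subset S <= S'} -> hd_in S u -> hd_in S' u.
Proof. by case: u => //= c u H /H. Qed.

Lemma adj_path_map sigma (c : 'I_sigma) x q :
  adj_path x q -> adj_path (c :: x) (map (cons c) q).
Proof.
elim: q x => //= y q IH x [H1 H2]; split; [exact: swap_adj_cons | exact: IH].
Qed.

Lemma adj_path_cat sigma (x : seq 'I_sigma) s t :
  adj_path x s -> adj_path (last x s) t -> adj_path x (s ++ t).
Proof.
elim: s x => //= y s IH x [H1 H2] H3; split => //; exact: IH.
Qed.


Lemma chain sigma n (P : 'I_sigma -> nat)
  (IH : forall (Q : 'I_sigma -> nat) w, size w = n -> has_parikh Q w ->
        exists p, hamiltonian_path_from Q w p)
  (bs : seq 'I_sigma) :
  forall a v, size v = n.+1 -> has_parikh P v -> hd_in [:: a] v ->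
  a \notin bs -> uniq bs -> all (fun b => 0 < P b) bs ->
  exists p, [/\ uniq (v :: p), all (has_parikh P) (v :: p),
     (forall u, has_parikh P u -> hd_in (a :: bs) u -> u \in v :: p),
     all (hd_in (a :: bs)) (v :: p) & adj_path v p].
Proof.
elim: bs => [|b bs IHbs] a [|c v'] // Hs Hv Hc; move: Hc; rewrite /= mem_seq1 => /eqP Hc;
  subst c => Hnot Hu Hall.
all: have [HPa Hv'] := parikh_cons Hv.
all: have [q [Hq1 Hq2 Hq3 Hq4]] := IH _ v' (eq_add_S _ _ Hs) Hv'.
all: have F1 : uniq (map (cons a) (v' :: q)) by rewrite map_inj_uniq // => x y [].
all: have F2 : all (has_parikh P) (map (cons a) (v' :: q))
  by apply/allP => x /mapP [y Hy ->]; apply: parikh_cons2 HPa _; exact: (allP Hq2).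
all: have F3 : forall u, has_parikh P u -> hd_in [:: a] u -> u \in map (cons a) (v' :: q)
  by case => [|c u] // Hu0; rewrite [hd_in _ _]/= mem_seq1 => /eqP Ec; subst c; apply: map_f; apply: Hq3;
     exact: (parikh_cons Hu0).2.
all: have F4 : all (hd_in [:: a]) (map (cons a) (v' :: q))
  by apply/allP => x /mapP [y _ ->]; rewrite /= mem_seq1.
all: have F5 : adj_path (a :: v') (map (cons a) q) by exact: adj_path_map.
  by exists (map (cons a) q); split; [exact F1|exact F2|exact F3|by rewrite eqxx /=; apply/allP => x /mapP [y _ ->]; rewrite /= mem_seq1|exact F5].
have Elast : last (a :: v') (map (cons a) q) = a :: last v' q by exact: last_map.
move: Hnot Hu Hall; rewrite inE negb_or => /andP [Hab Hna] /andP [Hb Hu] /andP [HPb Hall].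
have Hz : has_parikh (fun x => P x - (x == a)) (last v' q) by exact: (allP Hq2) _ (mem_last v' q).
move: (last v' q) Elast Hz => z Elast Hz.
have Hbz : b \in z.
  have : 0 < count_mem b z.
    by move/forallP: Hz => /(_ b)/eqP ->; rewrite eq_sym (negbTE Hab) subn0.
  by rewrite -has_count has_pred1.
have [z1 [z2 Ez]] : exists z1 z2, z = z1 ++ b :: z2.
  by case/splitPr: Hbz => z1 z2; exists z1, z2.
subst z.
have Haz := parikh_cons2 HPa Hz.
set y := b :: z1 ++ a :: z2.
have Hy : has_parikh P y.
  apply/forallP => x; move/forallP: Haz => /(_ x) /eqP <-.
  rewrite /y /= !count_cat /=.
  move: (nat_of_bool (b == x)) (nat_of_bool (a == x)) (count_mem x z1) (count_mem x z2) => p1 p2 p3 p4.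
  by rewrite [p3 + (p2 + p4)]addnCA addnCA [p3 + (p1 + p4)]addnCA.
have Hysize : size y = n.+1 by rewrite (perm_size (parikh_perm Hy Hv)).
have [p' [Hp1 Hp2 Hp3 Hp4 Hp5]] := IHbs b y Hysize Hy ltac:(by rewrite /= mem_seq1) Hb Hu Hall.
exists (map (cons a) q ++ y :: p').
rewrite -(cat_cons (a :: v') (map (cons a) q) (y :: p')).
have Hdisj : forall x, x \in y :: p' -> x \notin map (cons a) (v' :: q).
  move=> x Hx; apply/negP => /mapP [x' _ Ex].
  move: (allP Hp4 x Hx); rewrite Ex /= inE (negbTE Hna) orbF => /eqP E; by rewrite E eqxx in Hab.
have F1' : uniq ((a :: v') :: map (cons a) q) := F1.
have F2' : all (has_parikh P) ((a :: v') :: map (cons a) q) := F2.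
have F3' : forall u, has_parikh P u -> hd_in [:: a] u -> u \in (a :: v') :: map (cons a) q := F3.
have F4' : all (hd_in [:: a]) ((a :: v') :: map (cons a) q) := F4.
have G1 : uniq (((a :: v') :: map (cons a) q) ++ y :: p').
  rewrite cat_uniq F1' Hp1 andbT; apply/hasPn => x Hx; exact: Hdisj.
have G2 : all (has_parikh P) (((a :: v') :: map (cons a) q) ++ y :: p').
  by rewrite all_cat F2' Hp2.
have G3 : forall u, has_parikh P u -> hd_in [:: a, b & bs] u ->
    u \in ((a :: v') :: map (cons a) q) ++ y :: p'.
  move=> u Hu' Hh; rewrite mem_cat.
  have [Ha|Ha] := boolP (hd_in [:: a] u); first by rewrite (F3' u Hu' Ha).
  rewrite Hp3 ?orbT //; move: Hh Ha {Hu'}; case: u => // c u /=.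
  by rewrite !inE; case: (c == a).
have G4 : all (hd_in [:: a, b & bs]) (((a :: v') :: map (cons a) q) ++ y :: p').
  rewrite all_cat; apply/andP; split; apply/allP => x Hx.
    by apply: (hd_in_sub _ (allP F4' x Hx)) => t; rewrite !inE => ->.
  by apply: (hd_in_sub _ (allP Hp4 x Hx)) => t; rewrite !inE => ->; rewrite orbT.
have G5 : adj_path (a :: v') (map (cons a) q ++ y :: p').
  apply: adj_path_cat => //; rewrite Elast /=; split => //.
  exact: swap_adj_cross.
by split; [exact G1|exact G2|exact G3|exact G4|exact G5].
Qed.

Lemma ham n : forall sigma (P : 'I_sigma -> nat) w, size w = n -> has_parikh P w ->
  exists p, hamiltonian_path_from P w p.
Proof.
elim: n => [|n IH] sigma P [|a u] // Hs Hw.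
  have G : forall u, has_parikh P u -> u \in [:: [::]].
    case => [|c v] // /forallP /(_ c) /eqP.
    by move/forallP: Hw => /(_ c) /eqP <-; rewrite /= eqxx.
  exists [::]; split; [by [] | by rewrite /= Hw | exact G | by []].
have [HPa _] := parikh_cons Hw.
pose bs := [seq b <- enum 'I_sigma | (b != a) && (0 < P b)].
have Hb1 : a \notin bs by rewrite mem_filter eqxx.
have Hb2 : uniq bs by rewrite filter_uniq // enum_uniq.
have Hb3 : all (fun b => 0 < P b) bs
  by apply/allP => b; rewrite mem_filter => /andP [/andP [_ ->] _].
have [p [H1 H2 H3 H4 H5]] :=
  @chain sigma n P (IH sigma) bs a (a :: u) Hs Hw ltac:(by rewrite /= mem_seq1) Hb1 Hb2 Hb3.
exists p; split => //.
move=> v Hv; apply: H3 => //; case: v Hv => [|c v] Hv.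
  by move/forallP: Hv => /(_ a) /eqP E; rewrite /= in E; rewrite -E in HPa.
rewrite /= inE mem_filter mem_enum andbT; case: eqP => //= _.
exact: (parikh_cons Hv).1.
Qed.

Theorem theorem4 (sigma : nat) (P : 'I_sigma -> nat) (w : seq 'I_sigma) :
  2 <= sigma -> has_parikh P w ->
  exists p : seq (seq 'I_sigma), hamiltonian_path_from P w p.
Proof. by move=> _; exact: (@ham (size w) sigma P w). Qed.
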